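(* Let $\Gamma=(V,E)$ be a graph, $M_v$ ($v\in V$) monoids, and $M=\Gamma_{v\in V}M_v$. Let $a\in M$, $v\in V$ and $c\in M_v$. Suppose $a$ has final $v$-component $d$ and final $v$-complement $a'$. Then $ac$ has final $v$-component $dc$ and final $v$-complement $a'$.
   Context: A graph $\Gamma=(V,E)$ has vertex set $V$ and irreflexive symmetric edge relation $E$. The graph product $M=\Gamma_{v\in V}M_v$ of pairwise disjoint monoids $M_v$ is the quotient of their free product by the congruence generated by $(mn,nm)$ for $m\in M_u$, $n\in M_v$, $(u,v)\in E$; each $M_v$ is identified with its image in $M$. Let $X$ be the disjoint union of the sets $M_v\setminus\{1\}$, and for $m\in M_v\setminus\{1\}$ set $C(m)=v$. A word $x_1\circ\cdots\circ x_n\in X^*$ is an expression for $x_1\cdots x_n\in M$; it is reduced if whenever $i<j$ and $C(x_i)=C(x_j)$ there is $k$ with $i<k<j$ and $(C(x_i),C(x_k))\notin E$. For $a,a'\in M$ and $c\in M_v\setminus\{1\}$: $a$ has final $v$-component $c$ and final $v$-complement $a'$ if $a$ has a reduced expression $a_1\circ\cdots\circ a_m\circ c$ with $a_1\cdots a_m=a'$; and $a$ has final $v$-component $1$ and final $v$-complement $a$ if $a$ has a reduced expression $a_1\circ\cdots\circ a_m$ such that either (i) $C(a_j)\ne v$ for all $j$, or (ii) there is $k$ with $(C(a_k),v)\notin E$ and $C(a_j)\ne v$ for all $j\ge k$. Each element has exactly one final $v$-component and one final $v$-complement. *)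

(* Defs.v *)
From Stdlib Require Import List Relations.
Import ListNotations.

Record Monoid := MkMonoid {
  mcar :> Type;
  mmul : mcar -> mcar -> mcar;
  mone : mcar;
  mmulA : forall x y z, mmul x (mmul y z) = mmul (mmul x y) z;
  mmul1l : forall x, mmul mone x = x;
  mmul1r : forall x, mmul x mone = x
}.

Section GraphProduct.
Variables (V : Type) (E : V -> V -> Prop) (Mv : V -> Monoid).

(** Letters: elements of the disjoint union of the M_v (identities included;
    the set X of the paper consists of the letters whose second component is
    not the identity). [C] is the colour (vertex) of a letter. *)
Definition letter := {v : V & Mv v}.
Definition C (x : letter) : V := projT1 x.
Definition nontriv (x : letter) : Prop := projT2 x <> mone (Mv (projT1 x)).

(** Defining relations of the graph product, presented on the free monoid on
    the disjoint union of the M_v: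
    - the identity of M_v is the empty word (free product);
    - two consecutive letters of M_v multiply (free product);
    - letters of adjacent vertices commute (graph product). *)
Inductive basic_rel : list letter -> list letter -> Prop :=
| br_one : forall v, basic_rel [existT _ v (mone (Mv v))] []
| br_mul : forall v (m n : Mv v),
    basic_rel [existT _ v m; existT _ v n] [existT _ v (mmul (Mv v) m n)]
| br_comm : forall u v (m : Mv u) (n : Mv v), E u v ->
    basic_rel [existT _ u m; existT _ v n] [existT _ v n; existT _ u m].

Definition one_step (w1 w2 : list letter) : Prop :=
  exists p q l r, w1 = p ++ l ++ q /\ w2 = p ++ r ++ q /\ basic_rel l r.

(** The congruence generated by the defining relations; the graph product M
    is the quotient of words by [geq].  A word is an expression for the
    element it represents. *)
Definition geq : list letter -> list letter -> Prop :=
  clos_refl_sym_trans _ one_step.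

Definition reduced (w : list letter) : Prop :=
  (forall x, In x w -> nontriv x) /\
  forall i j x y, i < j -> nth_error w i = Some x -> nth_error w j = Some y ->
    C x = C y ->
    exists k z, i < k /\ k < j /\ nth_error w k = Some z /\ ~ E (C x) (C z).

(** [final v a d a']: the element represented by [a] has final v-component [d]
    and final v-complement (the element represented by) [a']. *)
Definition final (v : V) (a : list letter) (d : Mv v) (a' : list letter) : Prop :=
  (d <> mone (Mv v) /\
     exists r, reduced (r ++ [existT _ v d]) /\ geq (r ++ [existT _ v d]) a
               /\ geq r a')
  \/
  (d = mone (Mv v) /\ geq a' a /\
     exists r, reduced r /\ geq r a /\
       ((forall x, In x r -> C x <> v) \/
        (exists k z, nth_error r k = Some z /\ ~ E (C z) v /\
           forall j y, k <= j -> nth_error r j = Some y -> C y <> v))).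

End GraphProduct.

(* Main.v *)
Require Import Defs.
From Stdlib Require Import List Relations Lia Classical Arith PeanoNat.
Import ListNotations.

Section Aux.
Variables (V : Type) (E : V -> V -> Prop) (Mv : V -> Monoid).

Lemma geq_app_r (x y s : list (letter V Mv)) :
  geq V E Mv x y -> geq V E Mv (x ++ s) (y ++ s).
Proof.
  induction 1.
  - apply rst_step. destruct H as (p & q & l & r & -> & -> & Hb).
    exists p, (q ++ s), l, r. rewrite <- !app_assoc. auto.
  - apply rst_refl.
  - apply rst_sym; auto.
  - eapply rst_trans; eauto.
Qed.

Lemma geq_mul (r : list (letter V Mv)) v (m n : Mv v) :
  geq V E Mv (r ++ [existT _ v m] ++ [existT _ v n]) (r ++ [existT _ v (mmul (Mv v) m n)]).
Proof.
  apply rst_step. exists r, [], [existT _ v m; existT _ v n], [existT _ v (mmul (Mv v) m n)].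
  rewrite !app_nil_r. repeat split. constructor.
Qed.

Lemma geq_one (r : list (letter V Mv)) v :
  geq V E Mv (r ++ [existT _ v (mone (Mv v))]) r.
Proof.
  apply rst_step. exists r, [], [existT _ v (mone (Mv v))], [].
  rewrite !app_nil_r. repeat split. constructor.
Qed.

Lemma nth_snoc (r : list (letter V Mv)) y i z :
  nth_error (r ++ [y]) i = Some z ->
  (i < length r /\ nth_error r i = Some z) \/ (i = length r /\ z = y).
Proof.
  intros H. destruct (Nat.lt_ge_cases i (length r)).
  - left. rewrite nth_error_app1 in H; auto.
  - right. rewrite nth_error_app2 in H; auto.
    destruct (i - length r) eqn:Hi; simpl in H.
    + inversion H; split; auto; unfold letter in *; lia.
    + destruct n; discriminate.
Qed.

Lemma reduced_swap (r : list (letter V Mv)) x y :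
  reduced V E Mv (r ++ [x]) -> C V Mv x = C V Mv y -> nontriv V Mv y ->
  reduced V E Mv (r ++ [y]).
Proof.
  intros [Hn Hr] Hc Hy. split.
  - intros z Hz. apply in_app_or in Hz. destruct Hz as [Hz|Hz].
    + apply Hn, in_or_app; auto.
    + destruct Hz as [<-|[]]; auto.
  - intros i j a b Hij Ha Hb Hab.
    apply nth_snoc in Ha. apply nth_snoc in Hb.
    destruct Ha as [[Hi Ha]|[-> ->]]; [|destruct Hb as [[Hj _]|[Hj _]]; lia].
    assert (Ha' : nth_error (r ++ [x]) i = Some a) by (rewrite nth_error_app1; auto).
    destruct Hb as [[Hj Hb]|[-> ->]].
    + assert (Hb' : nth_error (r ++ [x]) j = Some b) by (rewrite nth_error_app1; auto).
      destruct (Hr i j a b Hij Ha' Hb' Hab) as (k & z & H1 & H2 & H3 & H4).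
      exists k, z. repeat split; auto. rewrite nth_error_app1 in H3 |- *; auto; unfold letter in *; lia.
    + assert (Hb' : nth_error (r ++ [x]) (length r) = Some x)
        by (rewrite nth_error_app2, Nat.sub_diag; auto).
      destruct (Hr i _ a x Hij Ha' Hb') as (k & z & H1 & H2 & H3 & H4); [congruence|].
      exists k, z. repeat split; auto. rewrite nth_error_app1 in H3 |- *; auto; unfold letter in *; lia.
Qed.

Lemma last_exists (P : nat -> Prop) N :
  (forall j, P j -> j < N) -> (exists j, P j) -> exists m, P m /\ forall j, m < j -> ~ P j.
Proof.
  revert P. induction N; intros P HB [j Hj].
  - specialize (HB j Hj); unfold letter in *; lia.
  - destruct (classic (P N)) as [HN|HN].
    + exists N. split; auto. intros k Hk Pk. specialize (HB k Pk). lia.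
    + apply IHN; eauto. intros k Pk. specialize (HB k Pk).
      assert (k <> N) by (intros ->; auto). lia.
Qed.

End Aux.


Theorem lemma1p4 (V : Type) (E : V -> V -> Prop)
  (E_irrefl : forall u, ~ E u u) (E_sym : forall u w, E u w -> E w u)
  (Mv : V -> Monoid) (a : list (letter V Mv)) (v : V) (c : Mv v)
  (d : Mv v) (a' : list (letter V Mv)) :
  final V E Mv v a d a' ->
  final V E Mv v (a ++ [existT _ v c]) (mmul (Mv v) d c) a'.
Proof.
  intros [[Hd (r & Hred & Hra & Hr')]|[Hd (Ha' & r & Hred & Hra & Hcond)]].
  - assert (Heq : geq V E Mv (r ++ [existT _ v (mmul (Mv v) d c)]) (a ++ [existT _ v c])).
    { eapply rst_trans. apply rst_sym. apply geq_mul.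
      rewrite app_assoc. apply geq_app_r. exact Hra. }
    destruct (classic (mmul (Mv v) d c = mone (Mv v))) as [H1|H1].
    + right. split; auto.
      assert (Hr : geq V E Mv r (a ++ [existT _ v c])).
      { eapply rst_trans; [|exact Heq]. rewrite H1. apply rst_sym. apply geq_one. }
      split.
      { eapply rst_trans; [apply rst_sym; exact Hr'|exact Hr]. }
      exists r. split; [|split; auto].
      * destruct Hred as [Hn Hr2]. split.
        -- intros x Hx. apply Hn, in_or_app; auto.
        -- intros i j x y Hij Hx Hy Hxy.
           assert (Hjr : j < length r) by (apply nth_error_Some; unfold letter in *; congruence).
           assert (Hx' : nth_error (r ++ [existT _ v d]) i = Some x) by (rewrite nth_error_app1; auto; unfold letter in *; lia).
           assert (Hy' : nth_error (r ++ [existT _ v d]) j = Some y) by (rewrite nth_error_app1; auto).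
           destruct (Hr2 i j x y Hij Hx' Hy' Hxy) as (k & z & K1 & K2 & K3 & K4).
           exists k, z. repeat split; auto.
           rewrite nth_error_app1 in K3; auto. lia.
      * destruct (classic (exists j, exists z, nth_error r j = Some z /\ ~ E (C V Mv z) v))
          as [Hex|Hno].
        -- right. destruct (last_exists (fun j => exists z, nth_error r j = Some z /\ ~ E (C V Mv z) v) (length r))
             as (m & (z & Hz & Hzv) & Hmax); auto.
           { intros j (z & Hz & _). apply nth_error_Some. congruence. }
           exists m, z. repeat split; auto.
           intros j y Hj Hy Hyv.
           destruct (Nat.eq_dec j m) as [->|Hne].
           ++ unfold letter in *. rewrite Hz in Hy. injection Hy as <-.
              destruct Hred as [_ Hr2].
              destruct (Hr2 m (length r) z (existT _ v d)) as (k & z' & K1 & K2 & K3 & K4).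
              { apply nth_error_Some. congruence. }
              { rewrite nth_error_app1; auto. apply nth_error_Some. congruence. }
              { rewrite nth_error_app2, Nat.sub_diag; auto. }
              { simpl. auto. }
              rewrite nth_error_app1 in K3 by lia.
              apply (Hmax k K1). exists z'. split; auto. rewrite Hyv in K4. auto.
           ++ apply (Hmax j). lia. exists y. split; auto. rewrite Hyv. apply E_irrefl.
        -- left. intros x Hx Hxv. apply Hno.
           destruct (In_nth_error _ _ Hx) as [j Hj]. exists j, x. split; auto.
           rewrite Hxv. apply E_irrefl.
    + left. split; auto. exists r. split; [|split; auto].
      eapply reduced_swap; eauto.
  - subst d. rewrite mmul1l.
    destruct (classic (c = mone (Mv v))) as [->|Hc].
    + right. split; auto. split.
      { eapply rst_trans; [exact Ha'|]. apply rst_sym, geq_one. }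
      exists r. split; auto. split; auto.
      eapply rst_trans; [exact Hra|]. apply rst_sym, geq_one.
    + left. split; auto. exists r. split; [|split].
      * destruct Hred as [Hn Hr2]. split.
        -- intros z Hz. apply in_app_or in Hz. destruct Hz as [Hz|[<-|[]]]; auto.
        -- intros i j x y Hij Hx Hy Hxy.
           apply nth_snoc in Hx. apply nth_snoc in Hy.
           destruct Hx as [[Hi Hx]|[-> ->]]; [|destruct Hy as [[Hj _]|[Hj _]]; lia].
           destruct Hy as [[Hj Hy]|[-> ->]].
           ++ destruct (Hr2 i j x y Hij Hx Hy Hxy) as (k & z & K1 & K2 & K3 & K4).
              exists k, z. repeat split; auto. rewrite nth_error_app1; auto; unfold letter in *; lia.
           ++ simpl in Hxy. destruct Hcond as [Hno|(k & z & Hz & Hzv & Hafter)].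
              ** exfalso. apply (Hno x); auto. eapply nth_error_In; eauto.
              ** assert (i < k).
                 { destruct (Nat.lt_ge_cases i k); auto. exfalso.
                   apply (Hafter i x); auto. }
                 assert (k < length r) by (apply nth_error_Some; congruence).
                 exists k, z. repeat split; auto.
                 rewrite nth_error_app1; auto.
                 rewrite Hxy. intros HE. apply Hzv, E_sym, HE.
      * apply geq_app_r; auto.
      * eapply rst_trans; [exact Hra|apply rst_sym; exact Ha'].
Qed.
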